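(* If $G$ is a nontrivial finite group, then $U(G)=V(G)$ if and only if $G$ is a semi-extraspecial group.
   Context: For a normal subgroup $H$ of $G$, $\mathrm{Irr}(G\mid H)$ is the set of $\chi\in\mathrm{Irr}(G)$ with $H\not\le\ker(\chi)$, and $V(G\mid H)$ is the subgroup generated by all $g\in G$ such that $\chi(g)\ne0$ for some $\chi\in\mathrm{Irr}(G\mid H)$ (with $V(G\mid 1)=1$). For a normal subgroup $N$, $U(G\mid N)$ is the product of all normal subgroups $H$ of $G$ with $V(G\mid H)\le N$, and $U(G)=U(G\mid Z(G))$ (so $U(G)=G$ when $G$ is abelian). $V(G)=V(G\mid G')$, the subgroup generated by all elements on which some nonlinear irreducible character is nonzero. A $p$-group $G$ is semi-extraspecial if $G/N$ is extraspecial for every maximal subgroup $N$ of $Z(G)$. *)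

(* Defs.v *)
From HB Require Import structures.
From mathcomp Require Import all_boot all_order all_algebra all_fingroup all_solvable all_field all_character.
Set Implicit Arguments.
Unset Strict Implicit.
Unset Printing Implicit Defensive.
Import GroupScope.
Local Open Scope group_scope.

Section Defs.
Variable gT : finGroupType.

Definition VGrel (G : {group gT}) (H : {set gT}) : {set gT} :=
  << [set g in G | [exists i : Iirr G,
        ~~ (H \subset cfker ('chi[G]_i)%R) && (('chi[G]_i)%R g != 0)%R]] >>.

Definition UGrel (G : {group gT}) (N : {set gT}) : {set gT} :=
  << \bigcup_(H : {group gT} | (H <| G) && (VGrel G H \subset N)) H >>.

Definition UG (G : {group gT}) : {set gT} := UGrel G 'Z(G).
Definition VG (G : {group gT}) : {set gT} := VGrel G (G^`(1)).

Definition extraspecial_pgroup (p : nat) (rT : finGroupType) (A : {set rT}) :=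
  p.-group A /\ extraspecial A.

Definition semi_extraspecial (G : {group gT}) :=
  exists p : nat, [/\ prime p, p.-group G &
    forall N : {group gT}, maximal N 'Z(G) -> extraspecial_pgroup p (G / N)].
End Defs.

(* Main.v *)
Require Import Defs.
From mathcomp Require Import all_boot all_order all_algebra all_fingroup all_solvable all_field all_character.
From mathcomp Require Import zify.
Set Implicit Arguments.
Unset Strict Implicit.
Unset Printing Implicit Defensive.
Import Order.TTheory GroupScope GRing.Theory Num.Theory.

Section S.
Variable gT : finGroupType.
Implicit Types G H : {group gT}.
Local Open Scope ring_scope.

Lemma sum_norm2 G g : g \in G ->
  (\sum_i `|'chi[G]_i g| ^+ 2 = (#|'C_G[g]|%:R : algC))%R.
Proof.
move=> Gg; have := second_orthogonality_relation g Gg.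
rewrite class_refl mulr1n => <-.
by apply: eq_bigr => i _; rewrite normCK.
Qed.

Lemma NL_card G g : g \in G ->
  (exists i : Iirr G, ~~ ((G^`(1))%g \subset cfker ('chi[G]_i)%R) && ('chi[G]_i g != 0)%R)
  <-> #|'C_G[g]| != #|G : (G^`(1))%g|.
Proof.
move=> Gg.
have E : ((#|'C_G[g]|%:R : algC) = #|G : (G^`(1))%g|%:R +
   \sum_(i | ~~ ('chi[G]_i \is a linear_char)) `|'chi[G]_i g| ^+ 2)%R.
  rewrite -sum_norm2 // (bigID (fun i : Iirr G => 'chi[G]_i \is a linear_char)) /=.
  congr (_ + _)%R.
  rewrite -card_lin_irr -sum1_card natr_sum.
  by apply: eq_bigr => i lin; rewrite normC_lin_char // expr1n.
have pos : forall i : Iirr G, ~~ ('chi[G]_i \is a linear_char) -> (0 <= `|'chi[G]_i g| ^+ 2)%R.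
  by move=> i _; rewrite exprn_ge0.
split.
- case=> i /andP[nl nz]; apply/negP => /eqP eqC.
  have S0 : \sum_(i | ~~ ('chi[G]_i \is a linear_char)) `|'chi[G]_i g| ^+ 2 = 0.
    by apply: (addrI (#|G : (G^`(1))%g|%:R)); rewrite -E eqC addr0.
  rewrite -lin_irr_der1 in nl.
  have := psumr_eq0P pos S0 nl; move/eqP.
  by rewrite sqrf_eq0 normr_eq0 (negPf nz).
- move=> neq; apply/existsP; apply: contraNT neq => /existsPn all0.
  rewrite -(eqr_nat algC) E.
  rewrite big1 ?addr0 // => i nl.
  have := all0 i; rewrite -lin_irr_der1 nl /= negbK => /eqP ->.
  by rewrite normr0 expr0n.
Qed.

Lemma F3 G H h : H <| G -> h \in H -> h != 1%g ->
  exists i : Iirr G, ~~ (H \subset cfker ('chi[G]_i)) && ('chi[G]_i h != 0).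
Proof.
move=> nHG Hh ntg; apply/existsP; apply: contraNT ntg => /existsPn all0.
case: eqP => // /eqP ntg.
have sHG := normal_sub nHG.
have : cfReg G h = 0 by rewrite cfRegE (negPf ntg).
rewrite cfReg_sum sum_cfunE (bigID (fun i : Iirr G => H \subset cfker 'chi[G]_i)) /=.
rewrite [X in _ + X]big1 ?addr0; last first.
  move=> i nk; have := all0 i; rewrite nk /= negbK => /eqP Z.
  by rewrite cfunE Z mulr0.
have -> : \sum_(i | H \subset cfker 'chi[G]_i) ('chi[G]_i 1%g *: 'chi[G]_i) h =
          \sum_(i | H \subset cfker 'chi[G]_i) 'chi[G]_i 1%g ^+ 2.
  apply: eq_bigr => i kk; rewrite cfunE expr2; congr (_ * _).
  by rewrite -[h]mulg1 cfkerMl // (subsetP kk).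
move=> S0.
have pos : forall i : Iirr G, H \subset cfker 'chi[G]_i -> 0 <= 'chi[G]_i 1%g ^+ 2.
  by move=> i _; rewrite exprn_ge0 // ltW ?irr1_gt0.
have := psumr_eq0P pos S0 (i:=0); rewrite cfker_irr0 sHG => /(_ isT) /eqP.
by rewrite sqrf_eq0 (negPf (irr1_neq0 0)).
Qed.

Lemma F4 G H : ~~ (H \subset (G^`(1))%g) -> G \subset VGrel G H.
Proof.
move=> nHG.
have [i lin nk] : exists2 i : Iirr G, 'chi[G]_i \is a linear_char & ~~ (H \subset cfker 'chi[G]_i).
  apply/exists_inP; apply: contraR nHG => /exists_inPn al.
  rewrite -cap_cfker_lin_irr; apply/bigcapsP => i lin; by have := al i lin; rewrite negbK.
apply/subsetP => g Gg; apply: mem_gen; rewrite inE Gg /=.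
by apply/existsP; exists i; rewrite nk lin_char_neq0.
Qed.

Lemma VG_cases G H : VGrel G H \subset G.
Proof. by rewrite gen_subG; apply/subsetP => g; rewrite inE => /andP[]. Qed.
End S.

Section T.
Variable gT : finGroupType.
Implicit Types G H N : {group gT}.

Definition Tset G g := [set [~ g, h] | h in G].

Lemma T_sub G g : G^`(1) \subset 'Z(G) -> g \in G -> Tset G g \subset 'Z(G).
Proof.
move=> sDZ Gg; apply/subsetP => x /imsetP[h Gh ->].
by apply: (subsetP sDZ); rewrite derg1 mem_commg.
Qed.

Lemma T_group G g : G^`(1) \subset 'Z(G) -> g \in G -> group_set (Tset G g).
Proof.
move=> sDZ Gg; apply/group_setP; split.
  by apply/imsetP; exists 1; rewrite ?group1 ?commg1.
move=> x y /imsetP[a Ga ->] /imsetP[b Gb ->].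
apply/imsetP; exists (b * a); first by rewrite groupM.
rewrite commgMJ; congr (_ * _).
have /centerP[_ cz] : [~ g, b] \in 'Z(G) by apply: (subsetP sDZ); rewrite derg1 mem_commg.
by apply/esym/conjg_fixP/commgP; apply: cz.
Qed.

Lemma T_card G g : #|Tset G g| = #|g ^: G|.
Proof.
have -> : Tset G g = [set (mulg g^-1 \o conjg g) h | h in G] by [].
by rewrite (imset_comp (mulg g^-1) (conjg g)) card_imset //; apply: mulgI.
Qed.

Definition NLset G := [set g in G | [exists i : Iirr G,
   ~~ (G^`(1) \subset cfker ('chi[G]_i)%R) && ('chi[G]_i g != 0)%R]].

Lemma NL_card' G g : g \in G ->
  (g \in NLset G) = (#|'C_G[g]| != #|G : G^`(1)|).
Proof.
move=> Gg; rewrite inE Gg /=; apply/idP/idP.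
  by move/existsP/(NL_card Gg).
by move/(NL_card Gg)/existsP.
Qed.

Lemma ZC G : 'Z(G) \subset 'C(G).
Proof. exact: subsetIr. Qed.

Lemma card_cent_Z G z : z \in 'Z(G) -> #|'C_G[z]| = #|G|.
Proof.
move=> /centerP[_ cz]; suff -> : 'C_G[z] = G by [].
apply/setIidPl/subsetP => y Gy.
by apply/cent1P; rewrite /commute (cz y Gy).
Qed.

Lemma cardG_ne_idx G : ~~ abelian G -> #|G| != #|G : G^`(1)|.
Proof.
move=> nab; have ntD : G^`(1) != 1 by apply: contra nab => /eqP/derG1P.
rewrite -cardG_gt1 in ntD.
rewrite -(Lagrange (der_sub 1 G)).
have := indexg_gt0 G (G^`(1)); move: ntD.
move: #|G^`(1)| #|G : G^`(1)| => a b ha hb; apply/eqP => E; nia.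
Qed.

Lemma cent_camina G g : g \in G ->
  (#|g ^: G| = #|G^`(1)|) <-> (#|'C_G[g]| = #|G : G^`(1)|).
Proof.
move=> Gg.
have E1 := Lagrange (subcent1_sub g G); rewrite index_cent1 in E1.
have E2 := Lagrange (der_sub 1 G).
have p1 := cardG_gt0 (G^`(1)); have p2 := indexg_gt0 G (G^`(1)).
have p3 := cardG_gt0 ('C_G[g]).
split=> E; apply/eqP.
  by rewrite -(eqn_pmul2r p1) -{1}E E1 -E2 mulnC.
by rewrite -(eqn_pmul2l p3) E1 E -E2 mulnC.
Qed.

Lemma VG_abelian G : abelian G -> VG G = 1.
Proof.
move=> ab; rewrite /VG /VGrel (derG1P ab); apply/eqP; rewrite eqEsubset sub1G andbT.
rewrite gen_subG; apply/subsetP => g; rewrite inE => /andP[_ /existsP[i]].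
by rewrite sub1G.
Qed.

Lemma UG_abelian G : abelian G -> G \subset UG G.
Proof.
move=> ab; rewrite /UG /UGrel.
have h : G \subset \bigcup_(H : {group gT} | (H <| G) && (VGrel G H \subset 'Z(G))) H.
  apply: (bigcup_sup G); rewrite normal_refl /= (center_idP ab); exact: VG_cases.
exact: subset_trans h (sub_gen _).
Qed.

Lemma UG_sub_der G : ~~ abelian G -> UG G \subset G^`(1).
Proof.
move=> nab; rewrite gen_subG; apply/bigcupsP => H /andP[nHG sVZ].
apply: contraR nab => nsub.
exact: subset_trans (subset_trans (F4 nsub) sVZ) (ZC G).
Qed.

Lemma H_sub_VGrel G H : H <| G -> H \subset VGrel G H.
Proof.
move=> nHG; apply/subsetP => g Hg; case: (eqVneq g 1) => [->|ntg]; first exact: group1.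
apply: mem_gen; rewrite inE (subsetP (normal_sub nHG)) //=.
have [i Hi] := F3 nHG Hg ntg; apply/existsP; by exists i.
Qed.

Lemma der_sub_VG G : G^`(1) \subset VG G.
Proof. exact: (H_sub_VGrel (der_normal 1 G)). Qed.

Lemma Z_sub_VG G : ~~ abelian G -> 'Z(G) \subset VG G.
Proof.
move=> nab; apply/subsetP => z Zz; apply: mem_gen.
have Gz : z \in G by apply: (subsetP (center_sub G)).
have := NL_card' Gz; rewrite /NLset inE Gz /= => ->.
by rewrite card_cent_Z // cardG_ne_idx.
Qed.

Lemma fwd G : G :!=: 1%G -> UG G = VG G -> semi_extraspecial G.
Proof.
move=> ntG UV.
have nab : ~~ abelian G.
  apply/negP => ab; move: (UG_abelian ab); rewrite UV (VG_abelian ab) subG1 => G1.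
  by rewrite G1 in ntG.
have UD : UG G = G^`(1).
  by apply/eqP; rewrite eqEsubset UG_sub_der // UV der_sub_VG.
have DZ : G^`(1) \subset 'Z(G).
  rewrite -UD gen_subG; apply/bigcupsP => H /andP[nHG sVZ].
  exact: subset_trans (H_sub_VGrel nHG) sVZ.
have ZD : 'Z(G) \subset G^`(1) by rewrite -UD UV; exact: Z_sub_VG.
have DeqZ : G^`(1) = 'Z(G) by apply/eqP; rewrite eqEsubset DZ ZD.
have VZ : VG G = 'Z(G) by rewrite -UV UD.
have cam : forall g, g \in G -> g \notin 'Z(G) -> Tset G g = 'Z(G).
  move=> g Gg nZg.
  have : g \notin NLset G by apply: contra nZg => NLg; rewrite -VZ; exact: mem_gen.
  rewrite NL_card' // negbK => /eqP cC.
  have cc : #|g ^: G| = #|G^`(1)| by apply/(cent_camina Gg).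
  by apply/eqP; rewrite eqEcard T_sub // T_card cc DeqZ leqnn.
have nGZ : ~~ (G \subset 'Z(G)) by apply: contra nab => sGZ; exact: subset_trans sGZ (ZC G).
have ntQ : 1 < #|G / 'Z(G)|.
  rewrite cardG_gt1; apply: contra nGZ => /eqP Q1.
  by rewrite -(quotient_sub1 (normal_norm (center_normal G))) Q1.
set p := pdiv #|G / 'Z(G)|.
have pr_p : prime p by apply: pdiv_prime.
have [x Qx ox] := Cauchy pr_p (pdiv_dvd _).
have := Qx; case/morphimP => g Ng Gg xg.
have {}xg : x = coset 'Z(G) g by [].
have nZg : g \notin 'Z(G).
  apply/negP => Zg; move: ox; rewrite xg coset_id // order1 => p1.
  by move: (prime_gt1 pr_p); rewrite -p1.
have Zgp : g ^+ p \in 'Z(G).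
  apply: coset_idr; first by rewrite groupX.
  have -> : coset 'Z(G) (g ^+ p) = coset 'Z(G) g ^+ p by exact: (morphX (coset_morphism _)).
  by rewrite -xg -ox expg_order.
have cZ : forall z y, z \in 'Z(G) -> y \in G -> commute z y.
  by move=> z y /centerP[_ cz] Gy; apply: cz.
have expZ : forall z, z \in 'Z(G) -> z ^+ p = 1.
  move=> z; rewrite -(cam g Gg nZg) => /imsetP[h Gh ->].
  have ZT : [~ g, h] \in 'Z(G) by apply: (subsetP (T_sub DZ Gg)); apply: imset_f.
  rewrite -commXg; last by apply/esym/cZ.
  by apply/eqP/commgP/cZ.
have DinZ : forall a b, a \in G -> b \in G -> [~ a, b] \in 'Z(G).
  by move=> a b Ga Gb; apply: (subsetP DZ); rewrite derg1 mem_commg.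
have powZ : forall a, a \in G -> a ^+ p \in 'Z(G).
  move=> a Ga; apply/centerP; split; first by rewrite groupX.
  move=> h Gh; apply/commgP; rewrite commXg; last by apply/esym/cZ; rewrite ?DinZ.
  by rewrite expZ ?DinZ.
have pG : p.-group G.
  apply/pgroupP => q pr_q qG; have [a Ga oa] := Cauchy pr_q qG.
  have : #[a] %| p * p by rewrite order_dvdn expgM expZ ?powZ.
  rewrite oa Euclid_dvdM // orbb dvdn_prime2 //.
have pZ : p.-group 'Z(G) := pgroupS (center_sub G) pG.
exists p; split => // N maxN.
have sNZ : N \subset 'Z(G) := proper_sub (maxgroupp maxN).
have nZN : ~~ ('Z(G) \subset N) by have := maxgroupp maxN; rewrite properE => /andP[].
have nNG : N <| G := sub_center_normal sNZ.
have nGN : G \subset 'N(N) := normal_norm nNG.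
have iZN : #|'Z(G) : N| = p := p_maximal_index pZ maxN.
have ZQ : 'Z(G / N) = 'Z(G) / N.
  apply/eqP; rewrite eqEsubset; apply/andP; split.
    apply/subsetP => y Zy.
    have Qy : y \in G / N by apply: (subsetP (center_sub _)).
    have := Qy; case/morphimP => a Na Ga ya.
    have {}ya : y = coset N a by [].
    case: (boolP (a \in 'Z(G))) => [Za|nZa]; first by rewrite ya mem_quotient.
    exfalso; move/negP: nZN; apply.
    have sa : [set a] \subset 'N(N) by rewrite sub1set.
    have : [set a] / N \subset 'C(G / N).
      rewrite quotient_set1 // sub1set -ya; by case/setIP: Zy.
    rewrite quotient_cents2 // => sC.
    rewrite -(cam a Ga nZa); apply/subsetP => z /imsetP[h Gh ->].
    by apply: (subsetP sC); rewrite mem_commg ?set11.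
  rewrite subsetI quotientS ?center_sub //=; exact: quotient_cents (ZC G).
split; first exact: quotient_pgroup.
have PhiZ : 'Phi(G) = 'Z(G).
  apply/eqP; rewrite eqEsubset (Phi_joing pG) -{2}DeqZ joing_subl andbT.
  rewrite join_subG DZ (MhoE 1 pG) gen_subG; apply/subsetP => y /imsetP[a Ga ->].
  by rewrite expn1 powZ.
split; first split.
- by rewrite -(quotient_Phi pG nGN) PhiZ ZQ.
- by rewrite -quotient_der // DeqZ ZQ.
by rewrite ZQ card_quotient ?iZN // (subset_trans (center_sub G) nGN).
Qed.

Lemma bwd G : G :!=: 1%G -> semi_extraspecial G -> UG G = VG G.
Proof.
move=> ntG [p [pr_p pG HN]].
have ntZ : 'Z(G) != 1 by rewrite (center_nil_eq1 (pgroup_nil pG)).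
have pZ : p.-group 'Z(G) := pgroupS (center_sub G) pG.
have facts : forall N : {group gT}, maximal N 'Z(G) ->
   [/\ N \subset 'Z(G), ~~ ('Z(G) \subset N), G \subset 'N(N),
       'Z(G / N) = 'Z(G) / N & special (G / N)].
  move=> N maxN.
  have sNZ : N \subset 'Z(G) := proper_sub (maxgroupp maxN).
  have nZN : ~~ ('Z(G) \subset N) by have := maxgroupp maxN; rewrite properE => /andP[].
  have nNG : N <| G := sub_center_normal sNZ.
  have nGN : G \subset 'N(N) := normal_norm nNG.
  have iZN : #|'Z(G) : N| = p := p_maximal_index pZ maxN.
  have [pQ [spQ prZ]] := HN N maxN.
  split => //.
  have sub : 'Z(G) / N \subset 'Z(G / N).
    rewrite subsetI quotientS ?center_sub //=; exact: quotient_cents (ZC G).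
  apply/eqP; rewrite eq_sym eqEcard sub /= card_quotient ?iZN; last first.
    exact: subset_trans (center_sub G) nGN.
  have pZQ : p.-group 'Z(G / N) := pgroupS (center_sub _) pQ.
  have := (pgroupP pZQ) _ prZ (dvdnn _); rewrite inE => /eqP ->.
  by [].
have [N0 maxN0] : exists N : {group gT}, maximal N 'Z(G).
  case: (maximal_exists (sub1G 'Z(G))) => [Z1|[N mN _]]; last by exists N.
  by rewrite -Z1 eqxx in ntZ.
have DZ : G^`(1) \subset 'Z(G).
  have [sNZ _ nGN ZQ [_ DQ]] := facts N0 maxN0.
  rewrite -(quotientSGK _ sNZ); last exact: subset_trans (der_sub 1 G) nGN.
  by rewrite quotient_der // DQ ZQ.
have DeqZ : G^`(1) = 'Z(G).
  case: (maximal_exists (G := 'Z(G)%G) (H := (G^`(1))%G) DZ) => [E | [N maxN sDN]]; first exact: E.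
  have [_ _ nGN ZQ [_ DQ]] := facts N maxN.
  have [_ [_ prZ]] := HN N maxN.
  by move: prZ; rewrite -DQ -quotient_der // quotientS1 // cards1.
have nab : ~~ abelian G.
  by apply: contra ntZ => /derG1P D1; rewrite -DeqZ D1.
have cam : forall g, g \in G -> g \notin 'Z(G) -> Tset G g = 'Z(G).
  move=> g Gg nZg.
  pose T := Group (T_group DZ Gg).
  have sTZ : T \subset 'Z(G) := T_sub DZ Gg.
  case: (maximal_exists sTZ) => [E | [N maxN sTN]]; first exact: E.
  have [sNZ nZN nGN ZQ _] := facts N maxN.
  exfalso; move/negP: nZg; apply.
  have sa : [set g] \subset 'N(N) by rewrite sub1set (subsetP nGN).
  have sC : [set g] / N \subset 'C(G / N).
    rewrite quotient_cents2 //; rewrite /commg_set gen_subG.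
    apply/subsetP => y /imset2P[a b /set1P -> Gb ->].
    by apply: (subsetP sTN); apply: imset_f.
  have : [set g] / N \subset 'Z(G / N).
    by rewrite subsetI quotientS ?sub1set //= sC.
  by rewrite ZQ quotientSGK // ?sub1set.
have NLZ : forall g, g \in G -> (g \in NLset G) = (g \in 'Z(G)).
  move=> g Gg; rewrite NL_card' //.
  case: (boolP (g \in 'Z(G))) => [Zg|nZg].
    by rewrite card_cent_Z // cardG_ne_idx.
  apply/negbTE; rewrite negbK; apply/eqP/(cent_camina Gg).
  by rewrite -T_card cam // DeqZ.
have VZ : VG G = 'Z(G).
  rewrite /VG /VGrel -/(NLset G).
  have -> : NLset G = 'Z(G).
    apply/setP => g; case: (boolP (g \in G)) => Gg; first by rewrite NLZ.
    rewrite /NLset inE (negPf Gg); apply/esym/negbTE; apply: contra Gg.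
    exact: (subsetP (center_sub G)).
  exact: genGid.
rewrite VZ; apply/eqP; rewrite eqEsubset -{1}DeqZ UG_sub_der //=.
have h : 'Z(G) \subset \bigcup_(H : {group gT} | (H <| G) && (VGrel G H \subset 'Z(G))) H.
  apply: (bigcup_sup 'Z(G)%G); rewrite center_normal /= -{1}DeqZ.
  by rewrite -/(VG G) VZ.
exact: subset_trans h (sub_gen _).
Qed.

End T.

Theorem lemma6p3 (gT : finGroupType) (G : {group gT}) :
  G :!=: 1%G -> (UG G = VG G <-> semi_extraspecial G).
Proof. by move=> ntG; split; [apply: fwd | apply: bwd]. Qed.
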